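(* Let $c\in[\frac12,1)$ and let $d,\delta$ be positive integers with $d\ge\delta$. Let $G$ be a graph with maximum degree $\delta$ and $w:V(G)\to[0,1]$ a weight function with $w(V(G))=1$, and assume $G$ has no $d$-bounded $(w,c)$-balanced separator. Fix a bijection $\mathcal{O}:V(G)\to\{1,\dots,|V(G)|\}$ and let $\beta$ be the star-free bag of $G$. Let $F$ be a forcer for $G$. Then $G[\beta]$ is $F$-free.
   Context: For $X\subseteq V(G)$, $w(X)=\sum_{x\in X}w(x)$; $N(X)$ is the set of vertices outside $X$ with a neighbor in $X$, $N[X]=N(X)\cup X$; $N^d[v]$ is the set of vertices at distance at most $d$ from $v$. $X$ is $d$-bounded if $X\subseteq N^d[v]$ for some $v$; $X$ is a $(w,c)$-balanced separator if every connected component $D$ of $G\setminus X$ has $w(D)\le c$. For $v\in V(G)$, the canonical star separation $S_v=(A_v,C_v,B_v)$: $B_v$ is the (under these assumptions unique) largest-weight connected component of $G\setminus N[v]$, $C_v$ consists of $v$ and every vertex of $N(v)$ with a neighbor in $B_v$, and $A_v=V(G)\setminus(B_v\cup C_v)$. Vertices $u,v$ are star twins if $B_u=B_v$, $C_u\setminus\{u\}=C_v\setminus\{v\}$, $A_u\setminus\{v\}=A_v\setminus\{u\}$. The partial order $\le_A$: $x\le_A y$ if $x=y$, or $x,y$ are star twins and $\mathcal{O}(x)<\mathcal{O}(y)$, or $x,y$ are not star twins and $y\in A_x$. Let $X$ be the set of minimal elements of $\le_A$; the star-free bag is $\beta=\bigcap_{x\in X}(B_x\cup C_x)$. For $Y\subseteq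 V(G)$ and $v\in V(G)\setminus Y$, $v$ breaks $Y$ if for every connected component $D$ of $G\setminus N[v]$, $Y\not\subseteq N[D]$. A graph $F$ is a forcer for $G$ if for every $Y\subseteq V(G)$ with $G[Y]$ isomorphic to $F$ there is $v\in Y$ that breaks $Y\setminus\{v\}$. *)

(* Defs.v *)
From HB Require Import structures.
From mathcomp Require Import all_boot all_order all_algebra.
Set Implicit Arguments. Unset Strict Implicit. Unset Printing Implicit Defensive.
Import Order.TTheory GRing.Theory Num.Theory.

(* Simple graph G: vertex set a finType T, adjacency e : rel T
   (assumed symmetric and irreflexive in the theorem). *)
Section Graph.
Variables (T : finType) (e : rel T).

Definition nbhd (v : T) : {set T} := [set u | e v u].
Definition nbhdS (X : {set T}) : {set T} :=
  [set u | (u \notin X) && [exists x in X, e x u]].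
Definition cnbhdS (X : {set T}) : {set T} := X :|: nbhdS X.
Definition cnbhd (v : T) : {set T} := cnbhdS [set v].
Fixpoint ball (v : T) (k : nat) : {set T} :=
  match k with 0 => [set v] | k'.+1 => cnbhdS (ball v k') end.

Definition induced_rel (S : {set T}) : rel T :=
  fun a b => [&& a \in S, b \in S & e a b].
Definition is_component (S D : {set T}) : bool :=
  [exists x in S, D == [set y in S | connect (induced_rel S) x y]].

Definition bounded (d : nat) (X : {set T}) : Prop :=
  exists v, X \subset ball v d.

Section Weights.
Variables (R : numDomainType) (w : T -> R).
Local Open Scope ring_scope.
Definition wt (X : {set T}) : R := \sum_(x in X) w x.

Definition balanced_sep (c : R) (X : {set T}) : Prop :=
  forall D, is_component (~: X) D -> wt D <= c.

Definition Bset (v : T) : {set T} :=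
  odflt set0 [pick D | is_component (~: cnbhd v) D &&
                       [forall D', is_component (~: cnbhd v) D' ==> (wt D' <= wt D)]].
Definition Cset (v : T) : {set T} :=
  v |: [set u in nbhd v | [exists b in Bset v, e u b]].
Definition Aset (v : T) : {set T} := ~: (Bset v :|: Cset v).

Definition star_twins (u v : T) : bool :=
  [&& Bset u == Bset v, Cset u :\ u == Cset v :\ v & Aset u :\ v == Aset v :\ u].

Definition leA (O : T -> nat) (x y : T) : bool :=
  [|| x == y, star_twins x y && (O x < O y)%N | ~~ star_twins x y && (y \in Aset x)].

Definition minimalA (O : T -> nat) : {set T} :=
  [set x | [forall y, leA O y x ==> (y == x)]].

Definition star_free_bag (O : T -> nat) : {set T} :=
  \bigcap_(x in minimalA O) (Bset x :|: Cset x).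
End Weights.

Definition breaks (Y : {set T}) (v : T) : bool :=
  (v \notin Y) &&
  [forall D, is_component (~: cnbhd v) D ==> ~~ (Y \subset cnbhdS D)].

Definition induced_copy (TF : finType) (eF : rel TF) (Y : {set T}) : Prop :=
  exists f : TF -> T,
    [/\ injective f, f @: [set: TF] = Y & forall a b, eF a b = e (f a) (f b)].

Definition forcer (TF : finType) (eF : rel TF) : Prop :=
  forall Y, induced_copy eF Y -> exists2 v, v \in Y & breaks (Y :\ v) v.

Definition F_free_in (TF : finType) (eF : rel TF) (S : {set T}) : Prop :=
  ~ exists Y : {set T}, Y \subset S /\ induced_copy eF Y.
End Graph.

(* Main.v *)
Require Import Defs.
From HB Require Import structures.
From mathcomp Require Import all_boot all_order all_algebra.
Import Order.TTheory GRing.Theory Num.Theory.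
Local Open Scope ring_scope.
Set Implicit Arguments. Unset Strict Implicit. Unset Printing Implicit Defensive.

Section Aux.
Variables (T : finType) (e : rel T).
Hypothesis eS : symmetric e.

Lemma comp_root S D : is_component e S D ->
  exists2 r, r \in S & D = [set y in S | connect (induced_rel e S) r y].
Proof. by case/existsP=> r /andP[rS /eqP ->]; exists r. Qed.


Lemma induced_sym S : symmetric (induced_rel e S).
Proof. by move=> a b; rewrite /induced_rel eS andbCA. Qed.


Lemma comp_closed S D b z : is_component e S D -> b \in D -> z \in S -> e b z ->
  z \in D.
Proof.
case/comp_root=> r rS ->; rewrite !inE => /andP[bS cb] zS ebz.
rewrite zS /=; apply: connect_trans cb (connect1 _).
by rewrite /induced_rel bS zS ebz.
Qed.


Lemma comp_sub S D : is_component e S D -> D \subset S.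
Proof. by case/comp_root=> r _ ->; apply/subsetP=> x; rewrite inE => /andP[]. Qed.


Lemma comp_eq S D1 D2 z : is_component e S D1 -> is_component e S D2 ->
  z \in D1 -> z \in D2 -> D1 = D2.
Proof.
case/comp_root=> r1 r1S -> ; case/comp_root=> r2 r2S ->.
rewrite !inE => /andP[zS c1] /andP[_ c2].
have csym := sym_connect_sym (induced_sym S).
apply/setP=> y; rewrite !inE; case: (y \in S) => //=.
apply/idP/idP => h.
- by apply: connect_trans c2 _; apply: connect_trans h; rewrite csym.
- by apply: connect_trans c1 _; apply: connect_trans h; rewrite csym.
Qed.


Lemma comp_subcomp (S S' D : {set T}) : is_component e S D -> D \subset S' ->
  exists2 D', is_component e S' D' & D \subset D'.
Proof.
move=> cD DS'; have DS := comp_sub cD.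
case/comp_root: (cD) => r rS defD.
have rD : r \in D by rewrite defD inE rS connect0.
have rS' : r \in S' by apply: (subsetP DS').
exists [set y in S' | connect (induced_rel e S') r y].
  by apply/existsP; exists r; rewrite rS' eqxx.
apply/subsetP=> z zD; rewrite inE (subsetP DS') //=.
move: zD; rewrite {1}defD inE => /andP[_ /connectP[p pth ->]].
elim: p r rD pth {rS rS' defD} => [|b p IH] a aD /=; first by rewrite connect0.
case/andP=> ab pth.
have bD : b \in D.
  by apply: (comp_closed cD aD); move: ab; rewrite /induced_rel => /and3P[].
apply: connect_trans (IH b bD pth).
apply: connect1; move: ab; rewrite /induced_rel => /and3P[_ _ ->].
by rewrite !(subsetP DS').
Qed.


End Aux.

Lemma half_le (R : realFieldType) (c : R) : 2^-1 <= c -> 1 <= c + c.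
Proof. move=> h. have := ler_wpM2r (ler0n R 2) h. rewrite mulVf ?pnatr_eq0 //. by rewrite mulr_natr mulr2n. Qed.

Lemma arith a b K oy ox : (a < b)%N -> (oy <= K)%N -> (a * K.+1 + oy < b * K.+1 + ox)%N.
Proof.
move=> ab oK; apply: (@leq_trans (a.+1 * K.+1)).
  by rewrite mulSn addnC ltn_add2r ltnS.
by apply: leq_trans (leq_addr _ _); rewrite leq_mul2r ab orbT.
Qed.

Section Weighted.
Variables (R : realFieldType) (T : finType) (e : rel T) (w : T -> R) (c : R) (d : nat).
Hypothesis eS : symmetric e.
Hypothesis chalf : 2^-1 <= c.
Hypothesis d1 : (0 < d)%N.
Hypothesis w0 : forall v, 0 <= w v.
Hypothesis wT : wt w [set: T] = 1.
Hypothesis nosep : ~ (exists X : {set T}, bounded e d X /\ balanced_sep e w c X).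

Lemma wt_sub (A B : {set T}) : A \subset B -> wt w A <= wt w B.
Proof.
move=> AB; rewrite /wt [X in _ <= X](big_setID A) /= (setIidPr AB) lerDl.
by apply: sumr_ge0 => i _; apply: w0.
Qed.


Lemma wt_disj (A B : {set T}) : [disjoint A & B] -> wt w (A :|: B) = wt w A + wt w B.
Proof.
move=> dAB; rewrite /wt -bigU //=; apply: eq_bigl => x; by rewrite !inE.
Qed.


Lemma ball_mono v k : ball e v k \subset ball e v k.+1.
Proof. by rewrite /= /cnbhdS subsetUl. Qed.


Lemma ball_mono2 v k m : (k <= m)%N -> ball e v k \subset ball e v m.
Proof.
elim: m => [|m IH]; first by rewrite leqn0 => /eqP ->.
rewrite leq_eqVlt => /orP[/eqP -> //|]; rewrite ltnS => /IH h.
exact: subset_trans h (ball_mono _ _).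
Qed.


Lemma heavy_comp v : exists2 D, is_component e (~: cnbhd e v) D & c < wt w D.
Proof.
case: (boolP [exists D, is_component e (~: cnbhd e v) D && (c < wt w D)]).
  by case/existsP=> D /andP[cD lt]; exists D.
move=> hn; exfalso; apply: nosep; exists (cnbhd e v); split.
  by exists v; apply: (ball_mono2 v d1).
move=> D cD; rewrite leNgt; apply/negP=> lt; move/existsP: hn; apply.
by exists D; rewrite cD lt.
Qed.


Definition Bpick v :=
  [pick D | is_component e (~: cnbhd e v) D &&
            [forall D', is_component e (~: cnbhd e v) D' ==> (wt w D' <= wt w D)]].

Lemma Bset_spec v :
  [/\ is_component e (~: cnbhd e v) (Bset e w v),
      forall D', is_component e (~: cnbhd e v) D' -> wt w D' <= wt w (Bset e w v)
    & c < wt w (Bset e w v)].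
Proof.
have [D0 cD0 lt0] := heavy_comp v.
rewrite /Bset; case: pickP => [D /andP[cD /forallP mx]|none].
  have mx' : forall D', is_component e (~: cnbhd e v) D' -> wt w D' <= wt w D.
    by move=> D' cD'; move: (mx D'); rewrite cD'.
  split => //; exact: lt_le_trans lt0 (mx' _ cD0).
exfalso.
case: (@arg_maxP _ R {set T} D0 (is_component e (~: cnbhd e v)) (wt w) cD0)
  => D cD mx.
move: (none D); rewrite cD /=; move/negP; apply; apply/forallP=> D'.
by apply/implyP; apply: mx.
Qed.




Lemma in_cnbhd v z : (z \in cnbhd e v) = (z == v) || e v z.
Proof.
rewrite /cnbhd /cnbhdS /nbhdS !inE; case: eqP => //= _.
apply/existsP/idP => [[x /andP[]]|h]; first by rewrite inE => /eqP ->.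
by exists v; rewrite inE eqxx.
Qed.


Notation B := (Bset e w).
Notation C := (Cset e w).
Notation A := (Aset e w).

Lemma B_out v z : z \in B v -> (z != v) && ~~ e v z.
Proof.
case: (Bset_spec v) => cB _ _ zB.
by move: (subsetP (comp_sub cB) z zB); rewrite inE in_cnbhd negb_or.
Qed.


Lemma inA v z : (z \in A v) = (z \notin B v) && (z \notin C v).
Proof. by rewrite /Aset !inE negb_or. Qed.


Lemma inC v z : (z \in C v) = (z == v) || (e v z && [exists b in B v, e z b]).
Proof. by rewrite /Cset !inE. Qed.


Local Opaque Aset Bset Cset.

Lemma adjB v z b : z \notin B v -> z != v -> e z b -> b \in B v ->
  e v z.
Proof.
move=> zB zv ezb bB; case: (boolP (e v z)) => //= nvz.
case: (Bset_spec v) => cB _ _.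
exfalso; move/negP: zB; apply; apply: (comp_closed cB bB); last by rewrite eS.
by rewrite inE in_cnbhd negb_or zv.
Qed.


Lemma A_noadj v z b : z \in A v -> b \in B v -> ~~ e z b.
Proof.
rewrite inA inC negb_or => /and3P[zB zv nC] bB; apply/negP=> ezb.
have evz := adjB zB zv ezb bB.
by move: nC; rewrite evz /=; case/existsP; exists b; rewrite bB ezb.
Qed.


Lemma Cminus v z : (z \in C v :\ v) = (z \notin B v) && [exists b in B v, e z b].
Proof.
rewrite in_setD1 inC; case: eqP => [->|zv].
  apply/esym/negbTE/negP => /andP[_ /existsP[b /andP[bB evb]]].
  by move: (B_out bB); rewrite evb andbF.
rewrite andTb.
apply/andP/andP => [[evz /existsP[b /andP[bB ezb]]]|[zB /existsP[b /andP[bB ezb]]]].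
  split; last by apply/existsP; exists b; rewrite bB.
  by apply/negP=> zB; move: (B_out zB); rewrite evz andbF.
have evz := adjB zB (introN eqP zv) ezb bB.
by split => //; apply/existsP; exists b; rewrite bB.
Qed.


Lemma A_sub x y : y \in A x -> B x \subset B y.
Proof.
move=> yA.
case: (Bset_spec x) => cBx _ ltx.
have sub : B x \subset ~: cnbhd e y.
  apply/subsetP=> b bB; rewrite in_setC in_cnbhd negb_or.
  have nyb := A_noadj yA bB.
  rewrite nyb andbT.
  by apply/eqP=> eby; move: yA; rewrite inA -eby bB.
have [D' cD' sD'] := comp_subcomp cBx sub.
case: (Bset_spec y) => cBy mxy _.
suff -> : B y = D' by [].
have ltD' : c < wt w D' := lt_le_trans ltx (wt_sub sD').
case: (boolP [exists z, (z \in B y) && (z \in D')]).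
  by case/existsP=> z /andP[z1 z2]; apply: (comp_eq eS cBy cD' z1 z2).
move=> ndis; exfalso.
have dj : [disjoint B y & D'].
  rewrite disjoint_subset; apply/subsetP=> z zB;
  by apply/negP=> zD; move/existsP: ndis; apply; exists z; rewrite zB zD.
have := wt_sub (subsetT (B y :|: D')). rewrite wT. rewrite wt_disj //.
have le := mxy _ cD'.
have h1 : 1 <= c + c by apply: half_le.
have h2 : c + c < wt w (B y) + wt w D'.
  by apply: ltr_leD; [exact: lt_le_trans ltD' le | exact: ltW ltD'].
move=> hle; have := lt_le_trans (le_lt_trans h1 h2) hle; by rewrite ltxx.
Qed.

Lemma A_mono x v z : B x \subset B v -> z \in A v -> z != x -> z \in A x.
Proof.
move=> sub zA zx; have zA' := zA; rewrite inA in zA'; case/andP: zA' => zBv _.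
rewrite inA; apply/andP; split.
  by apply/negP=> zB; move/negP: zBv; apply; apply: (subsetP sub).
rewrite inC negb_or (negbTE zx) andTb negb_and; apply/orP; right.
apply/negP=> /existsP[b /andP[bB ezb]].
by move/negP: (A_noadj zA (subsetP sub b bB)); apply.
Qed.

Lemma C_split v z : (z \in C v) = (z == v) || (z \in C v :\ v).
Proof.
rewrite in_setD1; case: eqP => [->|_].
  by rewrite inC eqxx orTb.
by rewrite orFb andTb.
Qed.

Lemma A_char v z : (z \in A v) =
  [&& z != v, z \notin B v & ~~ [exists b in B v, e z b]].
Proof.
rewrite inA; case: (boolP (z \in B v)) => zB; first by rewrite !andbF.
rewrite !andTb C_split negb_or; congr (_ && _).
by rewrite Cminus zB andTb.
Qed.

Lemma twins_B x y : B x = B y -> star_twins e w x y.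
Proof.
move=> hB; rewrite /star_twins; apply/and3P; split; apply/eqP.
- exact: hB.
- apply/setP=> z; apply: etrans (Cminus x z) _; apply: esym.
  by apply: etrans (Cminus y z) _; rewrite hB.
apply/setP=> z.
apply: etrans (in_setD1 _ _ _) _; apply: esym; apply: etrans (in_setD1 _ _ _) _; apply: esym.
apply: etrans (congr1 (andb _) (A_char x z)) _.
apply: esym; apply: etrans (congr1 (andb _) (A_char y z)) _.
rewrite hB.
by case: (z =P x); case: (z =P y).
Qed.

Variables (O : T -> nat).
Hypothesis hO : forall v, (1 <= O v <= #|T|)%N.

Definition meas u := (#|B u| * #|T|.+1 + O u)%N.

Lemma meas_lt y x : leA e w O y x -> y != x -> (meas y < meas x)%N.
Proof.
rewrite /leA => /or3P[/eqP-> |/andP[tw lt]|/andP[ntw xA]]; first by rewrite eqxx.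
  move=> _; move: tw; rewrite /star_twins => /andP[/eqP hB _].
  by rewrite /meas hB ltn_add2l.
move=> _.
have sB := A_sub xA.
have nB : B y != B x by apply/eqP=> hB; move: ntw; rewrite twins_B.
have pr : B y \proper B x by rewrite properEneq nB sB.
have cl := proper_card pr.
have Oy := hO y; have Ox := hO x.
exact: arith cl (proj2 (andP Oy)).
Qed.

Lemma exists_min v : exists2 x, x \in minimalA e w O & B x \subset B v.
Proof.
case: (@arg_minnP _ v (fun u => B u \subset B v) meas (subxx _)) => x sx mn.
exists x => //; rewrite inE; apply/forallP=> y; apply/implyP=> le.
apply/negPn/negP=> yx.
have lt := meas_lt le yx.
have sy : B y \subset B v.
  move: le; rewrite /leA => /or3P[/eqP eyx|/andP[tw _]|/andP[_ xA]].
  - by exfalso; rewrite eyx eqxx in yx.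
  - by move: tw; rewrite /star_twins => /andP[/eqP -> _].
  - exact: subset_trans (A_sub xA) sx.
by move: (mn y sy); rewrite leqNgt lt.
Qed.

Lemma main_sec (TF : finType) (eF : rel TF) : forcer e eF ->
  F_free_in e eF (star_free_bag e w O).
Proof.
move=> forc [Y [YS cY]].
have [v vY br] := forc Y cY.
case: (Bset_spec v) => cBv _ _.
have hn : ~~ (Y :\ v \subset cnbhdS e (B v)).
  by move: br; rewrite /breaks => /andP[_ /forallP /(_ (B v)) /implyP]; apply.
case/subsetPn: hn => y yY ycn.
move: yY; rewrite in_setD1 => /andP[yv yYY].
have yA : y \in A v.
  move: ycn; rewrite /cnbhdS in_setU negb_or => /andP[yB ynb].
  rewrite inA; apply/andP; split; first exact: yB.
  rewrite inC negb_or yv andTb negb_and; apply/orP; right.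
  apply/negP=> /existsP[b /andP[bB eyb]].
  move/negP: ynb; apply; rewrite /nbhdS in_set; apply/andP; split; first exact: yB.
  by apply/existsP; exists b; rewrite bB andTb eS.
have [x xmin sx] := exists_min v.
have bag : star_free_bag e w O \subset B x :|: C x.
  by rewrite /star_free_bag; apply: bigcap_inf; exact: xmin.
have yx : y = x.
  apply/eqP; apply/negPn/negP => yx.
  have h := A_mono sx yA yx.
  rewrite inA in h.
  have hb := subsetP bag y (subsetP YS y yYY).
  rewrite in_setU in hb.
  case/andP: h => h1 h2; case/orP: hb => hb.
  - exact: (negP h1 hb).
  - exact: (negP h2 hb).
have hB : B x = B v.
  apply/eqP; rewrite eqEsubset; apply/andP; split; first exact: sx.
  rewrite -yx; exact: A_sub yA.
have hv := subsetP bag v (subsetP YS v vY).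
rewrite in_setU in hv.
case/orP: hv => hv.
  rewrite hB in hv.
  by move: (B_out hv); rewrite eqxx andFb.
rewrite C_split in hv.
case/orP: hv => hv.
  move: hv; rewrite -yx => /eqP vy.
  exact: (negP yv (introT eqP (esym vy))).
rewrite Cminus in hv.
case/andP: hv => _ /existsP[b /andP[bB evb]].
rewrite hB in bB.
by move: (B_out bB); rewrite evb andbF.
Qed.

End Weighted.

Unset Implicit Arguments.

Theorem lemma4p10 (R : realFieldType) (T : finType) (e : rel T) (w : T -> R)
    (c : R) (d delta : nat) (O : T -> nat) (TF : finType) (eF : rel TF) :
  symmetric e -> irreflexive e ->
  2^-1 <= c -> c < 1 ->
  (0 < delta)%N -> (delta <= d)%N ->
  \max_(v : T) #|nbhd e v| = delta ->
  (forall v, 0 <= w v <= 1) -> wt w [set: T] = 1 ->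
  ~ (exists X : {set T}, bounded e d X /\ balanced_sep e w c X) ->
  injective O -> (forall v, 1 <= O v <= #|T|)%N ->
  symmetric eF -> irreflexive eF ->
  forcer e eF ->
  F_free_in e eF (star_free_bag e w O).
Proof.
move=> eS _ chalf _ dpos dd _ w01 wT nosep _ hO _ _ forc.
have d1 : (0 < d)%N by apply: leq_trans dpos dd.
have w0 : forall v, 0 <= w v by move=> v; case/andP: (w01 v).
eapply main_sec; eassumption.
Qed.
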